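(* If $M$ is an IC and IR mechanism that is left continuous, floor-randomized and satisfies DD, then $\theta\mapsto\mathrm{RS}_\alpha(\theta,M)$ is left continuous at every $\theta\in(\underline\theta,\overline\theta]$.
   Context: Setting. Let $\Theta=[\underline\theta,\overline\theta]$ with $0<\underline\theta<\overline\theta$. Let $c>0$ and let $P:\mathbb R_+\to\mathbb R_+$ be continuous and strictly decreasing with $P(\overline q)=0$ for some $\overline q>0$. Put $V(q)=\int_0^q P(z)\,dz$ and $\mathrm{TS}(\theta,q)=V(q)-c-\theta q$ for $q>0$, $\mathrm{TS}(\theta,0)=0$. Assume (A2): $\mathrm{TS}(\overline\theta,P^{-1}(\overline\theta))>0$. A mechanism is a triple $M=(r,q,u)$ of functions $r:\Theta\to[0,1]$, $q:\Theta\to[0,\overline q]$, $u:\Theta\to\mathbb R$ with $q(\theta)=0$ if and only if $r(\theta)=0$. It is IC if $u(\theta)\ge u(\theta')+(\theta'-\theta)q(\theta')r(\theta')$ for all $\theta,\theta'\in\Theta$, and IR if $u(\theta)\ge 0$ for all $\theta$. (Known fact: $M$ is IC iff $\theta\mapsto q(\theta)r(\theta)$ is nonincreasing and $u(\theta)=u(\overline\theta)+\int_\theta^{\overline\theta}q(z)r(z)\,dz$ for all $\theta$; an IC mechanism is IR iff $u(\overline\theta)\ge0$.) Fix $\alpha\in[0,1)$. The regulator's surplus at $\theta$ is $\mathrm{RS}_\alpha(\theta,M)=r(\theta)\,\mathrm{TS}(\theta,q(\theta))-(1-\alpha)u(\theta)$. The quantity floor $\hat q$ is the unique $q>0$ with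 $V(q)-qP(q)=c$. A mechanism $(r,q,u)$ is floor-randomized if it is IC, IR, $u(\overline\theta)=0$, and $\Theta$ can be partitioned into three pairwise disjoint (possibly empty) intervals $\Theta_1,\Theta_{01},\Theta_0$, with every element of $\Theta_0$ larger than every element of $\Theta_{01}$ and every element of $\Theta_{01}$ larger than every element of $\Theta_1$, such that: $q(\theta)\ge\hat q$ and $r(\theta)=1$ for $\theta\in\Theta_1$; $q(\theta)=\hat q$ and $r(\theta)\in(0,1)$ for $\theta\in\Theta_{01}$; $q(\theta)=r(\theta)=0$ for $\theta\in\Theta_0$. The efficient quantity is $q_e(\theta)=P^{-1}(\theta)$. A mechanism satisfies downward distortion (DD) if $q(\theta)\le q_e(\theta)$ for all $\theta$, with equality at $\theta=\underline\theta$. A mechanism is left continuous if $\theta\mapsto q(\theta)r(\theta)$ is left continuous at every $\theta\in(\underline\theta,\overline\theta]$. *)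

(* Defs.v *)
From Stdlib Require Import Reals.
From Coquelicot Require Import Coquelicot.
Open Scope R_scope.

Section Defs.
Variables (th_lo th_hi : R).

Definition inTheta (t : R) : Prop := th_lo <= t <= th_hi.

Definition V (P : R -> R) (x : R) : R := RInt P 0 x.

Definition TS (P : R -> R) (c t x : R) : R :=
  if Req_EM_T x 0 then 0 else V P x - c - t * x.

Definition is_mechanism (qbar : R) (r q u : R -> R) : Prop :=
  forall t, inTheta t ->
    (0 <= r t <= 1) /\ (0 <= q t <= qbar) /\ (q t = 0 <-> r t = 0).

Definition is_IC (r q u : R -> R) : Prop :=
  forall t t', inTheta t -> inTheta t' ->
    u t >= u t' + (t' - t) * q t' * r t'.

Definition is_IR (u : R -> R) : Prop := forall t, inTheta t -> u t >= 0.

Definition RS (P : R -> R) (c alpha : R) (r q u : R -> R) (t : R) : R :=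
  r t * TS P c t (q t) - (1 - alpha) * u t.

Definition is_qfloor (P : R -> R) (c qh : R) : Prop :=
  0 < qh /\ V P qh - qh * P qh = c.

Definition is_interval (I : R -> Prop) : Prop :=
  forall x y z, I x -> I y -> x <= z <= y -> I z.

Definition floor_randomized (qh : R) (r q u : R -> R) : Prop :=
  is_IC r q u /\ is_IR u /\ u th_hi = 0 /\
  exists T1 T01 T0 : R -> Prop,
    is_interval T1 /\ is_interval T01 /\ is_interval T0 /\
    (forall t, T1 t -> inTheta t) /\ (forall t, T01 t -> inTheta t) /\
    (forall t, T0 t -> inTheta t) /\
    (forall t, inTheta t -> T1 t \/ T01 t \/ T0 t) /\
    (forall t, ~ (T1 t /\ T01 t)) /\ (forall t, ~ (T1 t /\ T0 t)) /\
    (forall t, ~ (T01 t /\ T0 t)) /\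
    (forall x y, T01 x -> T0 y -> x < y) /\
    (forall x y, T1 x -> T01 y -> x < y) /\
    (forall t, T1 t -> qh <= q t /\ r t = 1) /\
    (forall t, T01 t -> q t = qh /\ 0 < r t < 1) /\
    (forall t, T0 t -> q t = 0 /\ r t = 0).

(* downward distortion: q(theta) <= q_e(theta) = P^{-1}(theta), with equality
   at th_lo; P^{-1}(theta) is the (unique) z >= 0 with P z = theta. *)
Definition DD (P : R -> R) (q : R -> R) : Prop :=
  (forall t z, inTheta t -> 0 <= z -> P z = t -> q t <= z) /\
  (forall z, 0 <= z -> P z = th_lo -> q th_lo = z).

Definition left_continuous_at (f : R -> R) (t : R) : Prop :=
  filterlim f (at_left t) (locally (f t)).

Definition mech_left_continuous (r q : R -> R) : Prop :=
  forall t, th_lo < t <= th_hi -> left_continuous_at (fun s => q s * r s) t.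

End Defs.

(* Main.v *)
Require Import Defs.
From Stdlib Require Import Reals Lra.
From Coquelicot Require Import Coquelicot.
Open Scope R_scope.
Lemma lip_cont (h : R -> R) a :
  (forall x y, Rabs (h x - h y) <= Rabs (x - y)) -> continuous h a.
Proof.
intros H. apply filterlim_locally. intros eps. exists eps. intros y Hy.
unfold ball in *; simpl in *; unfold AbsRing_ball, abs, minus, plus, opp in *; simpl in *.
eapply Rle_lt_trans; [apply H|exact Hy].
Qed.

Lemma lim_plus {T} (F : (T -> Prop) -> Prop) {FF : Filter F} f g a b :
  filterlim f F (locally a) -> filterlim g F (locally b) ->
  filterlim (fun x => f x + g x) F (locally (a + b)).
Proof. intros Hf Hg. exact (filterlim_comp_2 _ _ _ Hf Hg (filterlim_plus a b)). Qed.

Lemma lim_mult {T} (F : (T -> Prop) -> Prop) {FF : Filter F} f g a b :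
  filterlim f F (locally a) -> filterlim g F (locally b) ->
  filterlim (fun x => f x * g x) F (locally (a * b)).
Proof. intros Hf Hg. exact (filterlim_comp_2 _ _ _ Hf Hg (@filterlim_mult R_AbsRing a b)). Qed.

Lemma lim_comp {T} (F : (T -> Prop) -> Prop) f (h : R -> R) a :
  filterlim f F (locally a) -> continuous h a ->
  filterlim (fun x => h (f x)) F (locally (h a)).
Proof. intros. eapply filterlim_comp; eauto. Qed.

Lemma Rmax_lip c x y : Rabs (Rmax x c - Rmax y c) <= Rabs (x - y).
Proof. unfold Rmax; destruct (Rle_dec x c), (Rle_dec y c);
 apply Rabs_le; split_Rabs; lra. Qed.
Lemma Rmin_lip c x y : Rabs (Rmin x c - Rmin y c) <= Rabs (x - y).
Proof. unfold Rmin; destruct (Rle_dec x c), (Rle_dec y c);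
 apply Rabs_le; split_Rabs; lra. Qed.

Lemma lim_opp {T} (F : (T -> Prop) -> Prop) {FF : Filter F} f a :
  filterlim f F (locally a) -> filterlim (fun x => - f x) F (locally (- a)).
Proof. intros Hf. eapply filterlim_comp; [exact Hf|]. exact (@filterlim_opp _ _ a). Qed.

Lemma V_cont (P : R -> R) x : (forall y, continuous P y) -> continuous (V P) x.
Proof.
intros HP. apply (@ex_derive_continuous R_AbsRing R_NormedModule). exists (P x). unfold V.
apply (is_derive_RInt P (RInt P 0) 0 x); [|apply HP].
apply filter_forall. intros b. apply (@RInt_correct R_CompleteNormedModule). apply (@ex_RInt_continuous R_CompleteNormedModule).
intros; apply HP.
Qed.

Lemma u_leftcont th_lo th_hi qbar (r q u : R -> R) t :
  is_mechanism th_lo th_hi qbar r q u -> is_IC th_lo th_hi r q u ->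
  0 < qbar -> th_lo < t <= th_hi -> filterlim u (at_left t) (locally (u t)).
Proof.
intros Hm HIC Hq Ht. apply filterlim_locally. intros eps.
assert (Hd : 0 < Rmin (eps / (qbar + 1)) (t - th_lo)).
{ apply Rmin_glb_lt; [|lra]. apply Rdiv_lt_0_compat; [apply cond_pos|lra]. }
exists (mkposreal _ Hd). intros y Hy Hyt.
unfold ball in *; simpl in *; unfold AbsRing_ball, abs, minus, plus, opp in *; simpl in *.
assert (Hy1 : Rabs (y - t) < eps / (qbar + 1)) by (eapply Rlt_le_trans; [exact Hy| apply Rmin_l]).
assert (Hy2 : Rabs (y - t) < t - th_lo) by (eapply Rlt_le_trans; [exact Hy| apply Rmin_r]).
rewrite Rabs_left in Hy1, Hy2 by lra.
assert (Ty : inTheta th_lo th_hi y) by (unfold inTheta; lra).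
assert (Tt : inTheta th_lo th_hi t) by (unfold inTheta; lra).
destruct (Hm y Ty) as [[r1 r2] [[q1 q2] _]].
destruct (Hm t Tt) as [[r3 r4] [[q3 q4] _]].
pose proof (HIC t y Tt Ty) as H1. pose proof (HIC y t Ty Tt) as H2.
assert (Hmy : q y * r y <= qbar) by nra.
assert (Hmt : 0 <= q t * r t) by nra.
assert (He : eps / (qbar + 1) * (qbar + 1) = eps) by (field; lra).
assert (Hb1 : (y - t) * q y * r y >= - ((t - y) * qbar)) by nra.
assert (Hb2 : (t - y) * q t * r t >= 0) by nra.
assert (Hb3 : (t - y) * qbar < eps) by nra.
apply Rabs_def1; lra.
Qed.

Lemma RS_eq th_lo th_hi qbar alpha qh c (P r q u : R -> R) s :
  is_qfloor P c qh -> is_mechanism th_lo th_hi qbar r q u ->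
  floor_randomized th_lo th_hi qh r q u -> inTheta th_lo th_hi s ->
  RS P c alpha r q u s =
  (V P (Rmax (q s * r s) qh) + - c + Rmin (q s * r s) qh * P qh + - (qh * P qh))
  + - (s * (q s * r s)) + - ((1 - alpha) * u s).
Proof.
intros [Hqh0 Hqh] Hm [_ [_ [_ [T1 [T01 [T0 Hp]]]]]] Hs.
destruct Hp as [_ [_ [_ [_ [_ [_ [Hcov [_ [_ [_ [_ [_ [H1 [H01 H0]]]]]]]]]]]]]].
unfold RS, TS.
destruct (Hcov s Hs) as [Hs1 | [Hs1 | Hs1]].
- destruct (H1 s Hs1) as [Hq Hr]. rewrite Hr, Rmult_1_r.
  rewrite Rmax_left by lra. rewrite Rmin_right by lra.
  destruct (Req_EM_T (q s) 0); [lra|]. ring.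
- destruct (H01 s Hs1) as [Hq Hr]. rewrite Hq.
  rewrite Rmax_right by nra. rewrite Rmin_left by nra.
  destruct (Req_EM_T qh 0); [lra|].
  replace (V P qh) with (c + qh * P qh) by lra. ring.
- destruct (H0 s Hs1) as [Hq Hr]. rewrite Hq, Hr, Rmult_0_r.
  rewrite Rmax_right by lra. rewrite Rmin_left by lra.
  destruct (Req_EM_T 0 0); [|lra].
  replace (V P qh) with (c + qh * P qh) by lra. ring.
Qed.

Theorem lemma10
  (th_lo th_hi c qbar alpha qh : R) (P r q u : R -> R)
  (Hth : 0 < th_lo < th_hi) (Hc : 0 < c)
  (HPcont : forall x, continuous P x)
  (HPdec : forall x y, 0 <= x -> x < y -> P y < P x)
  (Hqbar : 0 < qbar) (HPqbar : P qbar = 0)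
  (HA2 : exists z, 0 <= z /\ P z = th_hi /\ TS P c th_hi z > 0)
  (Halpha : 0 <= alpha < 1)
  (Hqh : is_qfloor P c qh)
  (Hmech : is_mechanism th_lo th_hi qbar r q u)
  (HIC : is_IC th_lo th_hi r q u) (HIR : is_IR th_lo th_hi u)
  (Hlc : mech_left_continuous th_lo th_hi r q)
  (Hfr : floor_randomized th_lo th_hi qh r q u)
  (HDD : DD th_lo th_hi P q) :
  forall t, th_lo < t <= th_hi ->
    left_continuous_at (RS P c alpha r q u) t.
Proof.
intros t Ht. unfold left_continuous_at.
assert (Tt : inTheta th_lo th_hi t) by (unfold inTheta; lra).
rewrite (RS_eq th_lo th_hi qbar alpha qh c P r q u t Hqh Hmech Hfr Tt).
set (G := fun s => (V P (Rmax (q s * r s) qh) + - c + Rmin (q s * r s) qh * P qh + - (qh * P qh))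
  + - (s * (q s * r s)) + - ((1 - alpha) * u s)).
change (filterlim (RS P c alpha r q u) (at_left t) (locally (G t))).
apply (filterlim_ext_loc G).
2:{ unfold G.
  set (m := fun s => q s * r s).
  assert (Hm : filterlim m (at_left t) (locally (m t))) by exact (Hlc t Ht).
  assert (FF : Filter (at_left t)) by apply (at_left_proper_filter t).
  apply (lim_plus (at_left t)); [apply (lim_plus (at_left t))|].
  - apply (lim_plus (at_left t)); [apply (lim_plus (at_left t)); [apply (lim_plus (at_left t))|]|].
    + apply (lim_comp _ (fun s => Rmax (m s) qh) (V P)).
      * apply (lim_comp _ m (fun x => Rmax x qh)); [exact Hm|]. apply lip_cont, Rmax_lip.
      * apply V_cont; exact HPcont.
    + apply filterlim_const.
    + apply (lim_mult (at_left t)); [|apply filterlim_const].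
      apply (lim_comp _ m (fun x => Rmin x qh)); [exact Hm|]. apply lip_cont, Rmin_lip.
    + apply filterlim_const.
  - apply (lim_opp (at_left t)). apply (lim_mult (at_left t)); [|exact Hm].
    apply filterlim_locally. intros eps. exists eps. intros y Hy _. exact Hy.
  - apply (lim_opp (at_left t)). apply (lim_mult (at_left t)); [apply filterlim_const|].
    exact (u_leftcont th_lo th_hi qbar r q u t Hmech HIC Hqbar Ht).
}
simpl.
assert (Hd : 0 < t - th_lo) by lra.
exists (mkposreal _ Hd). intros y Hy Hyt.
unfold ball in *; simpl in *; unfold AbsRing_ball, abs, minus, plus, opp in *; simpl in *.
rewrite Rabs_left in Hy by lra.
symmetry. apply (RS_eq th_lo th_hi qbar alpha qh c P r q u y Hqh Hmech Hfr).
unfold inTheta; lra.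
Qed.
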